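(* Let $\mathcal P$ be a set of pre-tangles in a graph $G$, let $N$ be a nested set of separations of $G$ which efficiently distinguishes $\mathcal P$, and let $(\vec s_i)_{i\in\mathbb N}$ be a strictly increasing sequence of orientations of separations in $N$. If $(\vec s_i)_i$ is strongly $\mathcal P$-relevant, then there is a sequence $(P_i)_{i\in\mathbb N}$ in $\mathcal P$ such that for all $i\in\mathbb N$: $\overleftarrow{s}_i\in P_i$, $\vec s_i\in P_{i+1}$, and $s_i$ efficiently distinguishes $P_i$ and $P_{i+1}$.
   Context: Notation: $s$ denotes a separation (an unordered pair $\{A,B\}$ of subsets of $V(G)$ with $A\cup B=V(G)$ and no edge between $A\setminus B$ and $B\setminus A$; order $|s|=|A\cap B|$), $\vec s,\overleftarrow{s}$ its two orientations; oriented separations are ordered by $(A,B)\le(C,D)$ iff $A\subseteq C$ and $B\supseteq D$. Nested: some orientations comparable. A set $O$ of oriented separations is consistent if there are no $(A,B),(C,D)\in O$ with $\{A,B\}\ne\{C,D\}$ and $(B,A)\le(C,D)$. A pre-tangle is a consistent set $P$ which, for some $k\in\mathbb N\cup\{\aleph_0\}$, contains exactly one orientation of every separation of order $<k$ and nothing else. A separation distinguishes two pre-tangles if both contain an orientation of it but different ones; efficiently if of minimum order among such. $N$ efficiently distinguishes $\mathcal P$ if any two pre-tangles in $\mathcal P$ distinguished by some separation are efficiently distinguished by an element of $N$. A pair $\vec s<\vec t$ is strongly $\mathcal P$-relevant if there are $O,P,Q\in\mathcal P$ such that $s$ efficiently distinguishes $O$ and $P$ with $\vec s\in P$, and $t$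 efficiently distinguishes $P$ and $Q$ with $\overleftarrow{t}\in P$. A strictly increasing sequence $(\vec s_i)$ is strongly $\mathcal P$-relevant if each pair $\vec s_i<\vec s_{i+1}$ is. *)

(* Defs.v *)
From Stdlib Require Import List Arith.
Import ListNotations.

Section Seps.
Context {V : Type} (adj : V -> V -> Prop).

(* An oriented separation (A,B); the separation {A,B} is represented by
   either of its orientations. *)
Definition osep : Type := ((V -> Prop) * (V -> Prop))%type.

Definition swap (r : osep) : osep := (snd r, fst r).

Definition is_sep (r : osep) : Prop :=
  (forall v, fst r v \/ snd r v) /\
  (forall u v, fst r u -> ~ snd r u -> snd r v -> ~ fst r v ->
     ~ adj u v /\ ~ adj v u).

Definition has_order (r : osep) (n : nat) : Prop :=
  exists l : list V, length l = n /\ NoDup l /\ (forall x, In x l <-> (fst r x /\ snd r x)).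

(* order < k, for k ∈ ℕ ∪ {ℵ0}, with None standing for ℵ0. *)
Definition order_lt (r : osep) (k : option nat) : Prop :=
  exists n, has_order r n /\
    match k with Some m => n < m | None => True end.

Definition same_sep (r t : osep) : Prop := t = r \/ t = swap r.

Definition ole (r t : osep) : Prop :=
  (forall v, fst r v -> fst t v) /\ (forall v, snd t v -> snd r v).

Definition olt (r t : osep) : Prop := ole r t /\ r <> t.

Definition nested_pair (r t : osep) : Prop :=
  ole r t \/ ole r (swap t) \/ ole (swap r) t \/ ole (swap r) (swap t).

Definition consistent (O : osep -> Prop) : Prop :=
  forall r t, O r -> O t -> ~ same_sep r t -> ~ ole (swap r) t.

Definition pretangle (P : osep -> Prop) : Prop :=
  consistent P /\
  exists k : option nat,
    (forall r, P r -> is_sep r /\ order_lt r k) /\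
    (forall r, is_sep r -> order_lt r k ->
       (P r \/ P (swap r)) /\ (P r -> P (swap r) -> r = swap r)).

Definition distinguishes (r : osep) (P Q : osep -> Prop) : Prop :=
  is_sep r /\ r <> swap r /\
  ((P r /\ Q (swap r)) \/ (P (swap r) /\ Q r)).

Definition eff_distinguishes (r : osep) (P Q : osep -> Prop) : Prop :=
  distinguishes r P Q /\
  exists n, has_order r n /\
    (forall t m, distinguishes t P Q -> has_order t m -> n <= m).

(* N is given as a set of oriented separations; the separation of r lies in
   N iff r or its inverse is in N. *)
Definition sep_in (N : osep -> Prop) (r : osep) : Prop := N r \/ N (swap r).

Definition nested_set (N : osep -> Prop) : Prop :=
  (forall r, N r -> is_sep r) /\
  (forall r t, N r -> N t -> nested_pair r t).

Definition eff_dist_set (N : osep -> Prop) (PP : (osep -> Prop) -> Prop) : Prop :=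
  forall P Q, PP P -> PP Q -> (exists t, distinguishes t P Q) ->
    exists r, sep_in N r /\ eff_distinguishes r P Q.

Definition strongly_relevant_pair (PP : (osep -> Prop) -> Prop) (r t : osep) : Prop :=
  olt r t /\
  exists O P Q, PP O /\ PP P /\ PP Q /\
    eff_distinguishes r O P /\ P r /\
    eff_distinguishes t P Q /\ P (swap t).

Definition strictly_increasing (s : nat -> osep) : Prop :=
  forall i j, i < j -> olt (s i) (s j).

Definition strongly_relevant_seq (PP : (osep -> Prop) -> Prop) (s : nat -> osep) : Prop :=
  strictly_increasing s /\
  forall i, strongly_relevant_pair PP (s i) (s (S i)).

End Seps.

(* Main.v *)
Require Import Defs.
From Stdlib Require Import List Arith Lia ClassicalEpsilon.
Import ListNotations.

Section Aux.
Context {V : Type} (adj : V -> V -> Prop).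

Lemma swap_swap (r : @osep V) : swap (swap r) = r.
Proof. destruct r; reflexivity. Qed.

Lemma has_order_uniq (r : @osep V) a b : has_order r a -> has_order r b -> a = b.
Proof.
  intros [l1 [L1 [N1 H1]]] [l2 [L2 [N2 H2]]]; subst.
  apply Nat.le_antisymm; apply NoDup_incl_length; auto;
  intros x Hx; [apply H2, H1 | apply H1, H2]; exact Hx.
Qed.

Lemma has_order_swap (r : @osep V) n : has_order r n -> has_order (swap r) n.
Proof.
  intros [l [L [N H]]]; exists l; split; [exact L|split; [exact N|]].
  intros x; rewrite H; simpl; tauto.
Qed.

Lemma same_sep_swl (a b : @osep V) : same_sep (swap a) b -> same_sep a b.
Proof. destruct a, b; unfold same_sep, swap; simpl; intros [H|H]; inversion H; subst; auto. Qed.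
Lemma same_sep_swr (a b : @osep V) : same_sep a (swap b) -> same_sep a b.
Proof. destruct a, b; unfold same_sep, swap; simpl; intros [H|H]; inversion H; subst; auto. Qed.

Lemma nested_swl (a b : @osep V) : nested_pair a b -> nested_pair (swap a) b.
Proof. destruct a, b; unfold nested_pair, swap; simpl; tauto. Qed.
Lemma nested_swr (a b : @osep V) : nested_pair a b -> nested_pair a (swap b).
Proof. destruct a, b; unfold nested_pair, swap; simpl; tauto. Qed.

Lemma orient_r (P Q : @osep V -> Prop) r :
  pretangle adj P -> distinguishes adj r Q P -> P r -> Q (swap r).
Proof.
  intros [_ [k [H1 H2]]] [Hs [Hne [[Hq Hp]|[Hq Hp]]]] Pr; auto.
  exfalso; apply Hne. destruct (H1 _ Pr) as [Hs' Ho]. apply (proj2 (H2 _ Hs' Ho)); auto.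
Qed.

Lemma orient_l (P Q : @osep V -> Prop) r :
  pretangle adj P -> distinguishes adj r P Q -> P (swap r) -> Q r.
Proof.
  intros [_ [k [H1 H2]]] [Hs [Hne [[Hp Hq]|[Hp Hq]]]] Pr; auto.
  exfalso; apply Hne. destruct (H1 _ Hp) as [Hs' Ho]. apply (proj2 (H2 _ Hs' Ho)); auto.
Qed.

Lemma get_orient (C : @osep V -> Prop) s n0 r nr :
  pretangle adj C -> (C s \/ C (swap s)) -> has_order s n0 -> is_sep adj r ->
  has_order r nr -> nr < n0 -> C r \/ C (swap r).
Proof.
  intros [_ [k [H1 H2]]] Cs Ho Hr Hor Hlt.
  assert (Hk : order_lt r k).
  { assert (exists n', has_order s n' /\ match k with Some m => n' < m | None => True end) as [n' [Hn' Hb]].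
    { destruct Cs as [Cs|Cs]; destruct (H1 _ Cs) as [_ [n' [Hn' Hb]]]; exists n'; split; auto.
      apply has_order_swap in Hn'. exact Hn'. }
    pose proof (has_order_uniq _ _ _ Ho Hn'); subst.
    exists nr; split; auto. destruct k; auto; lia. }
  exact (proj1 (H2 _ Hr Hk)).
Qed.

Lemma key (A B C D : @osep V -> Prop) s n0 r nr :
  pretangle adj A -> pretangle adj B -> pretangle adj C -> pretangle adj D ->
  A (swap s) -> B s -> C s -> D (swap s) -> has_order s n0 ->
  (forall t m, distinguishes adj t A C -> has_order t m -> n0 <= m) ->
  (forall t m, distinguishes adj t D B -> has_order t m -> n0 <= m) ->
  is_sep adj r -> r <> swap r -> A (swap r) -> B r -> has_order r nr -> nr < n0 ->
  nested_pair r s -> False.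
Proof.
  intros pA pB pC pD As Bs Cs Ds Hs mAC mDB Hr Hne Ar Br Hor Hlt Hnest.
  assert (Cr : C (swap r)).
  { destruct (get_orient C s n0 r nr pC (or_introl Cs) Hs Hr Hor Hlt) as [Cr|Cr]; auto.
    exfalso. assert (n0 <= nr) by (apply (mAC r nr); [split; [exact Hr|split; [exact Hne|right; split; auto]]|exact Hor]). lia. }
  assert (Dr : D r).
  { destruct (get_orient D s n0 r nr pD (or_intror Ds) Hs Hr Hor Hlt) as [Dr|Dr]; auto.
    exfalso. assert (n0 <= nr) by (apply (mDB r nr); [split; [exact Hr|split; [exact Hne|right; split; auto]]|exact Hor]). lia. }
  assert (Hns : ~ same_sep r s).
  { intros [E|E]; subst.
    - pose proof (has_order_uniq _ _ _ Hs Hor); lia.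
    - apply has_order_swap in Hor. pose proof (has_order_uniq _ _ _ Hs Hor); lia. }
  destruct pA as [cA _]; destruct pB as [cB _]; destruct pC as [cC _]; destruct pD as [cD _].
  destruct Hnest as [H|[H|[H|H]]].
  - apply (cC (swap r) s Cr Cs); [intro X; apply Hns, same_sep_swl, X| exact H].
  - apply (cA (swap r) (swap s) Ar As); [intro X; apply Hns, same_sep_swr, same_sep_swl, X| exact H].
  - apply (cB r s Br Bs Hns H).
  - apply (cD r (swap s) Dr Ds); [intro X; apply Hns, same_sep_swr, X| exact H].
Qed.

Lemma choice3 {B : Type} (R : nat -> B -> B -> B -> Prop) :
  (forall i, exists x y z, R i x y z) -> exists f g h, forall i, R i (f i) (g i) (h i).
Proof.
  intros H.
  assert (H' : forall i, exists t : B * B * B, R i (fst (fst t)) (snd (fst t)) (snd t)).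
  { intros i; destruct (H i) as [x [y [z Hr]]]; exists (x, y, z); exact Hr. }
  set (F := fun i => proj1_sig (constructive_indefinite_description _ (H' i))).
  exists (fun i => fst (fst (F i))), (fun i => snd (fst (F i))), (fun i => snd (F i)).
  intros i; exact (proj2_sig (constructive_indefinite_description _ (H' i))).
Qed.

End Aux.

Theorem mainTheorem14 (V : Type) (adj : V -> V -> Prop)
  (PP : (osep -> Prop) -> Prop) (N : osep -> Prop) (s : nat -> osep) :
  (forall P, PP P -> pretangle adj P) ->
  nested_set adj N ->
  eff_dist_set adj N PP ->
  (forall i, sep_in N (s i)) ->
  strictly_increasing s ->
  strongly_relevant_seq adj PP s ->
  exists Pseq : nat -> (@osep V -> Prop),
    forall i, PP (Pseq i) /\
      Pseq i (swap (s i)) /\ Pseq (S i) (s i) /\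
      eff_distinguishes adj (s i) (Pseq i) (Pseq (S i)).
Proof.
  intros HPP Hnest Heff HsN _ [_ Hrel].
  destruct (choice3 (fun i O P Q => PP O /\ PP P /\ PP Q /\
    eff_distinguishes adj (s i) O P /\ P (s i) /\
    eff_distinguishes adj (s (S i)) P Q /\ P (swap (s (S i)))))
    as [O [P [Q HR]]].
  { intros i; destruct (Hrel i) as [_ X]; exact X. }
  exists (fun i => match i with 0 => O 0 | S j => P j end).
  intros [|j].
  - destruct (HR 0) as [PO [PPp [_ [E [Ps _]]]]].
    split; [exact PO|split; [exact (orient_r adj _ _ _ (HPP _ PPp) (proj1 E) Ps)|split; [exact Ps|exact E]]].
  - destruct (HR j) as [_ [PPj [PQj [_ [_ [Ej Pj]]]]]].
    destruct (HR (S j)) as [POs [PPs [_ [Es [Pss _]]]]].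
    split; [exact PPj|split; [exact Pj|split; [exact Pss|]]].
    split.
    + split; [exact (proj1 (proj1 Ej))|split; [exact (proj1 (proj2 (proj1 Ej)))|right; auto]].
    + destruct Ej as [dj [n0 [Hn0 m0]]].
      destruct Es as [ds [n1 [Hn1 m1]]].
      assert (n0 = n1) by (apply (has_order_uniq _ _ _ Hn0 Hn1)). subst n1.
      exists n0; split; auto.
      intros t m Ht Hm.
      destruct (le_lt_dec n0 m) as [|Hlt]; auto. exfalso.
      destruct (Heff _ _ PPj PPs (ex_intro _ t Ht)) as [r [Nr [dr [nr [Hnr mr]]]]].
      pose proof (mr t m Ht Hm) as Hle.
      assert (Hnp : nested_pair r (s (S j))).
      { clear -Hnest Nr HsN.
        destruct Hnest as [_ Hn2].
        destruct Nr as [Nr|Nr]; destruct (HsN (S j)) as [Ns|Ns].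
        - auto.
        - pose proof (nested_swr _ _ (Hn2 _ _ Nr Ns)) as X. rewrite swap_swap in X; exact X.
        - pose proof (nested_swl _ _ (Hn2 _ _ Nr Ns)) as X. rewrite swap_swap in X; exact X.
        - pose proof (nested_swr _ _ (nested_swl _ _ (Hn2 _ _ Nr Ns))) as X.
          rewrite !swap_swap in X; exact X. }
      pose proof (orient_l adj _ _ _ (HPP _ PPj) dj Pj) as Qs.
      pose proof (orient_r adj _ _ _ (HPP _ PPs) ds Pss) as Os.
      destruct dr as [Hr [Hne [[A1 B1]|[A1 B1]]]].
      * (* r in P j, swap r in P (S j): use swap r *)
        apply (key adj (P j) (P (S j)) (Q j) (O (S j)) (s (S j)) n0 (swap r) nr
          (HPP _ PPj) (HPP _ PPs) (HPP _ PQj) (HPP _ POs) Pj Pss Qs Os Hn0 m0 m1).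
        -- destruct Hr as [H1 H2]; split; [intro v; simpl; destruct (H1 v); auto|].
           intros u v a b c d; destruct (H2 v u c d a b); split; auto.
        -- intro X; apply Hne. rewrite swap_swap in X. symmetry; exact X.
        -- rewrite swap_swap; exact A1.
        -- exact B1.
        -- apply (has_order_swap adj); exact Hnr.
        -- lia.
        -- apply nested_swl; exact Hnp.
      * apply (key adj (P j) (P (S j)) (Q j) (O (S j)) (s (S j)) n0 r nr
          (HPP _ PPj) (HPP _ PPs) (HPP _ PQj) (HPP _ POs) Pj Pss Qs Os Hn0 m0 m1
          Hr Hne A1 B1 Hnr); [lia | exact Hnp].
Qed.
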